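(* Let $n\geq 4$ and let $\gamma: WT_n\to\mathrm{GL}_{n+1}(\mathbb{C})$ be a homogeneous $3$-local representation of the welded twin group $WT_n$. Then $\gamma$ is equivalent to one of the five representations $\gamma_j$, $1\leq j\leq 5$, defined by $\gamma_j(s_i)=\mathrm{diag}(I_{i-1},M_j,I_{n-i-1})$ and $\gamma_j(\rho_i)=\mathrm{diag}(I_{i-1},N_j,I_{n-i-1})$ for all $1\leq i\leq n-1$, where: (1) $M_1=\begin{pmatrix}1&0&0\\0&0&\frac1h\\0&h&0\end{pmatrix}$, $N_1=\begin{pmatrix}1&0&0\\0&0&p\\0&\frac1p&0\end{pmatrix}$, $h,p\in\mathbb{C}^*$; (2) $M_2=\begin{pmatrix}0&\frac1d&0\\d&0&0\\0&0&1\end{pmatrix}$, $N_2=\begin{pmatrix}0&k&0\\\frac1k&0&0\\0&0&1\end{pmatrix}$, $d,k\in\mathbb{C}^*$; (3) $M_3=N_3=\begin{pmatrix}1&0&0\\\frac1p&-1&p\\0&0&1\end{pmatrix}$, $p\in\mathbb{C}^*$; (4) $M_4=N_4=\begin{pmatrix}1&k&0\\0&-1&0\\0&\frac1k&1\end{pmatrix}$, $k\in\mathbb{C}^*$; (5) $M_5=N_5=I_3$.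
   Context: The virtual twin group $VT_n$ ($n\geq 2$) has generators $s_1,\dots,s_{n-1},\rho_1,\dots,\rho_{n-1}$ and defining relations: $s_i^2=1$ ($1\le i\le n-1$); $s_is_j=s_js_i$ ($|i-j|\ge2$); $\rho_i\rho_{i+1}\rho_i=\rho_{i+1}\rho_i\rho_{i+1}$ ($1\le i\le n-2$); $\rho_i\rho_j=\rho_j\rho_i$ ($|i-j|\ge2$); $\rho_i^2=1$; $s_i\rho_j=\rho_js_i$ ($|i-j|\ge2$); $\rho_i\rho_{i+1}s_i=s_{i+1}\rho_i\rho_{i+1}$ ($1\le i\le n-2$). The welded twin group $WT_n$ is the quotient of $VT_n$ by the additional relations $\rho_is_{i+1}s_i=s_{i+1}s_i\rho_{i+1}$ ($1\le i\le n-2$). A representation $\gamma:WT_n\to\mathrm{GL}_{n+1}(\mathbb{C})$ is homogeneous $3$-local if there are fixed $M,N\in\mathrm{GL}_3(\mathbb{C})$ with $\gamma(s_i)=\mathrm{diag}(I_{i-1},M,I_{n-i-1})$ and $\gamma(\rho_i)=\mathrm{diag}(I_{i-1},N,I_{n-i-1})$ for all $i$, with $\mathrm{diag}$ block-diagonal and $I_r$ the $r\times r$ identity. $\mathbb{C}^*=\mathbb{C}\setminus\{0\}$. Equivalent means conjugate by an invertible matrix. *)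

(* Defs.v *)
(* The complex numbers are modelled as R[i] = complex R
   (mathcomp-real-closed) for R : realType (the real numbers). *)
From HB Require Import structures.
From mathcomp Require Import all_boot all_order all_algebra.
From mathcomp Require Import reals complex.
Set Implicit Arguments. Unset Strict Implicit. Unset Printing Implicit Defensive.
Import Order.TTheory GRing.Theory Num.Theory.
Local Open Scope ring_scope.

Definition mx3 (K : nzRingType) (a b c d e f g h k : K) : 'M[K]_3 :=
  \matrix_(r < 3, s < 3)
    nth 0 (nth [::] [:: [:: a; b; c]; [:: d; e; f]; [:: g; h; k]] r) s.

(* diag(I_{i-1}, A, I_{n-i-1}) in 'M_(n+1), for 1 <= i <= n-1 (1-based i):
   the block A occupies (0-based) rows/columns i-1, i, i+1. *)
Definition locmx (K : nzRingType) (n i : nat) (A : 'M[K]_3) : 'M[K]_(n.+1) :=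
  \matrix_(r < n.+1, s < n.+1)
    if (i.-1 <= r < i.+2)%N && (i.-1 <= s < i.+2)%N
    then A (inord (r - i.-1)) (inord (s - i.-1))
    else (r == s)%:R.

Definition gen_idx (n i : nat) : bool := (1 <= i <= n.-1)%N.
Definition far (i j : nat) : bool := (i + 2 <= j)%N || (j + 2 <= i)%N.

Definition WT_relations (K : nzRingType) (n : nat) (S P : nat -> 'M[K]_(n.+1)) : Prop :=
  (forall i, gen_idx n i -> S i *m S i = 1%:M) /\
      (forall i j, gen_idx n i -> gen_idx n j -> far i j -> S i *m S j = S j *m S i) /\
      (forall i, (1 <= i <= n - 2)%N ->
         P i *m P i.+1 *m P i = P i.+1 *m P i *m P i.+1) /\
      (forall i j, gen_idx n i -> gen_idx n j -> far i j -> P i *m P j = P j *m P i) /\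
      (forall i, gen_idx n i -> P i *m P i = 1%:M) /\
      (forall i j, gen_idx n i -> gen_idx n j -> far i j -> S i *m P j = P j *m S i) /\
      (forall i, (1 <= i <= n - 2)%N ->
         P i *m P i.+1 *m S i = S i.+1 *m P i *m P i.+1) /\
      (forall i, (1 <= i <= n - 2)%N ->
         P i *m S i.+1 *m S i = S i.+1 *m S i *m P i.+1).

Definition homog_3local_rep (K : comUnitRingType) (n : nat) (M N : 'M[K]_3) : Prop :=
  M \in unitmx /\ N \in unitmx /\
  WT_relations (fun i => locmx n i M) (fun i => locmx n i N).

Definition equiv_local (K : comUnitRingType) (n : nat) (M N M' N' : 'M[K]_3) : Prop :=
  exists T : 'M[K]_(n.+1), T \in unitmx /\
    forall i, gen_idx n i ->
      T *m locmx n i M *m invmx T = locmx n i M' /\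
      T *m locmx n i N *m invmx T = locmx n i N'.

Section Reps.
Variable K : fieldType.
Definition M1 (h : K) := mx3 1 0 0 0 0 h^-1 0 h 0.
Definition N1 (p : K) := mx3 1 0 0 0 0 p 0 p^-1 0.
Definition M2 (d : K) := mx3 0 d^-1 0 d 0 0 0 0 1.
Definition N2 (k : K) := mx3 0 k 0 k^-1 0 0 0 0 1.
Definition MN3 (p : K) := mx3 1 0 0 p^-1 (-1) p 0 0 1.
Definition MN4 (k : K) := mx3 1 k 0 0 (-1) 0 0 k^-1 1.
End Reps.

(* Main.v *)
Require Import Defs.
From HB Require Import structures.
From mathcomp Require Import all_boot all_order all_algebra.
From mathcomp Require Import reals complex.
From mathcomp Require Import ring.
Import Order.TTheory GRing.Theory Num.Theory.
Local Open Scope ring_scope.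

Section Sub5.
Variable K : fieldType.
Definition sub5 n (H : (5 <= n.+1)%N) (Z : 'M[K]_(n.+1)) : 'M[K]_5 :=
  \matrix_(r < 5, s < 5) Z (widen_ord H r) (widen_ord H s).
Arguments sub5 {n} H Z.

Lemma sub5_mul n (H : (5 <= n.+1)%N) (Y Z : 'M[K]_(n.+1)) :
  (forall (m s : 'I_n.+1), (5 <= m)%N -> (s < 5)%N -> Z m s = 0) ->
  sub5 H (Y *m Z) = sub5 H Y *m sub5 H Z.
Proof.
move=> HZ; apply/matrixP => r s; rewrite !mxE.
rewrite (bigID (fun k : 'I_n.+1 => (k < 5)%N)) /=.
rewrite [X in _ + X]big1 ?addr0.
  by rewrite (big_ord_narrow H); apply: eq_bigr => k _; rewrite !mxE.
move=> k; rewrite -leqNgt => Hk; rewrite (HZ k (widen_ord H s) Hk) ?mulr0 //.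
exact: (ltn_ord s).
Qed.

Lemma loc_ll n i (A : 'M[K]_3) : (i <= 3)%N ->
  forall (m s : 'I_n.+1), (5 <= m)%N -> (s < 5)%N -> locmx n i A m s = 0.
Proof.
move=> Hi m s Hm Hs; rewrite mxE.
have -> : (i.-1 <= m < i.+2)%N = false.
  by apply/negbTE; rewrite negb_and -leqNgt; apply/orP; right; apply: leq_trans Hm; rewrite ltnS.
rewrite andFb; case: eqP => // Hms; by move: Hm; rewrite Hms leqNgt Hs.
Qed.

Lemma sub5_loc n (H : (5 <= n.+1)%N) i (A : 'M[K]_3) : sub5 H (locmx n i A) = locmx 4 i A.
Proof.
apply/matrixP => r s; rewrite !mxE /=.
by case: ifP => // _; rewrite -val_eqE /= val_eqE.
Qed.

Lemma sub5_1 n (H : (5 <= n.+1)%N) : sub5 H (1%:M : 'M[K]_(n.+1)) = 1%:M.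
Proof.
apply/matrixP => r s; rewrite !mxE /=.
by rewrite -val_eqE /= val_eqE.
Qed.

Lemma sub5_mul_loc n (H : (5 <= n.+1)%N) (Y : 'M[K]_(n.+1)) i A : (i <= 3)%N ->
  sub5 H (Y *m locmx n i A) = sub5 H Y *m locmx 4 i A.
Proof. by move=> Hi; rewrite sub5_mul ?sub5_loc //; apply: loc_ll. Qed.

Lemma equiv_of_eq n (M N M' N' : 'M[K]_3) : M = M' -> N = N' -> equiv_local n M N M' N'.
Proof.
move=> -> ->; exists 1%:M; split; first exact: unitmx1.
by move=> i _; rewrite invmx1 !mul1mx !mulmx1.
Qed.

Lemma mx3E (A : 'M[K]_3) : A = mx3 (A (inord 0) (inord 0)) (A (inord 0) (inord 1)) (A (inord 0) (inord 2))
  (A (inord 1) (inord 0)) (A (inord 1) (inord 1)) (A (inord 1) (inord 2))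
  (A (inord 2) (inord 0)) (A (inord 2) (inord 1)) (A (inord 2) (inord 2)).
Proof.
apply/matrixP => r s; rewrite mxE.
case: r => [[|[|[|r]]] Hr] //; case: s => [[|[|[|s]]] Hs] //=;
  by congr (A _ _); apply/val_inj; rewrite /= inordK.
Qed.
End Sub5.
Arguments sub5 {K n} H Z.

Definition o5 (k : nat) (H : (k < 5)%N) : 'I_5 := Ordinal H.
Lemma mul5E (K : fieldType) (A B : 'M[K]_5) r s : (A *m B) r s =
  A r (@o5 0 isT) * B (@o5 0 isT) s + A r (@o5 1 isT) * B (@o5 1 isT) s + A r (@o5 2 isT) * B (@o5 2 isT) s +
  A r (@o5 3 isT) * B (@o5 3 isT) s + A r (@o5 4 isT) * B (@o5 4 isT) s.
Proof. rewrite mxE !big_ord_recr big_ord0 /= add0r. by repeat (congr (_ + _)); congr (A _ _ * B _ _); apply: val_inj. Qed.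
Arguments o5 : clear implicits.
Definition mx5 {K : fieldType} (l : seq (seq K)) : 'M[K]_5 := \matrix_(r < 5, s < 5) nth 0 (nth [::] l r) s.
Lemma loc4_1 (K : fieldType) (A : 'M[K]_3) : locmx 4 1 A = mx5 [:: [:: A (inord 0) (inord 0); A (inord 0) (inord 1); A (inord 0) (inord 2); 0; 0]; [:: A (inord 1) (inord 0); A (inord 1) (inord 1); A (inord 1) (inord 2); 0; 0]; [:: A (inord 2) (inord 0); A (inord 2) (inord 1); A (inord 2) (inord 2); 0; 0]; [:: 0; 0; 0; 1; 0]; [:: 0; 0; 0; 0; 1]].
Proof.
apply/matrixP => r s; rewrite !mxE.
by case: r => [[|[|[|[|[|r]]]]] Hr] //; case: s => [[|[|[|[|[|s]]]]] Hs] //=.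
Qed.
Lemma loc4_2 (K : fieldType) (A : 'M[K]_3) : locmx 4 2 A = mx5 [:: [:: 1; 0; 0; 0; 0]; [:: 0; A (inord 0) (inord 0); A (inord 0) (inord 1); A (inord 0) (inord 2); 0]; [:: 0; A (inord 1) (inord 0); A (inord 1) (inord 1); A (inord 1) (inord 2); 0]; [:: 0; A (inord 2) (inord 0); A (inord 2) (inord 1); A (inord 2) (inord 2); 0]; [:: 0; 0; 0; 0; 1]].
Proof.
apply/matrixP => r s; rewrite !mxE.
by case: r => [[|[|[|[|[|r]]]]] Hr] //; case: s => [[|[|[|[|[|s]]]]] Hs] //=.
Qed.
Lemma loc4_3 (K : fieldType) (A : 'M[K]_3) : locmx 4 3 A = mx5 [:: [:: 1; 0; 0; 0; 0]; [:: 0; 1; 0; 0; 0]; [:: 0; 0; A (inord 0) (inord 0); A (inord 0) (inord 1); A (inord 0) (inord 2)]; [:: 0; 0; A (inord 1) (inord 0); A (inord 1) (inord 1); A (inord 1) (inord 2)]; [:: 0; 0; A (inord 2) (inord 0); A (inord 2) (inord 1); A (inord 2) (inord 2)]].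
Proof.
apply/matrixP => r s; rewrite !mxE.
by case: r => [[|[|[|[|[|r]]]]] Hr] //; case: s => [[|[|[|[|[|s]]]]] Hs] //=.
Qed.
Definition e5 {K : fieldType} (l : seq (seq K)) r s := nth 0 (nth [::] l r) s.
Definition lmul {K : fieldType} (l1 l2 : seq (seq K)) : seq (seq K) :=
  mkseq (fun r => mkseq (fun s => e5 l1 r 0 * e5 l2 0 s + e5 l1 r 1 * e5 l2 1 s + e5 l1 r 2 * e5 l2 2 s
     + e5 l1 r 3 * e5 l2 3 s + e5 l1 r 4 * e5 l2 4 s) 5) 5.
Lemma mx5_mul (K : fieldType) (l1 l2 : seq (seq K)) : mx5 l1 *m mx5 l2 = mx5 (lmul l1 l2).
Proof.
apply/matrixP => r s; rewrite mul5E !mxE /lmul /e5 /= !nth_mkseq //=.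
Qed.
Definition id5 {K : fieldType} : seq (seq K) :=
  [:: [:: 1; 0; 0; 0; 0]; [:: 0; 1; 0; 0; 0]; [:: 0; 0; 1; 0; 0]; [:: 0; 0; 0; 1; 0]; [:: 0; 0; 0; 0; 1]].
Lemma id5E (K : fieldType) : (1%:M : 'M[K]_5) = mx5 id5.
Proof.
apply/matrixP => r s; rewrite !mxE.
by case: r => [[|[|[|[|[|r]]]]] Hr] //; case: s => [[|[|[|[|[|s]]]]] Hs] //=.
Qed.
Ltac ent E r s h :=
  have h := congr1 (fun Z => @fun_of_matrix _ 5 5 Z (@o5 r isT) (@o5 s isT)) E;
  rewrite mxE mxE /lmul /e5 /= ?(mul0r, mulr0, mul1r, mulr1, add0r, addr0) in h;
  move/eqP: h; rewrite -subr_eq0 => /eqP h.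
Ltac prep E := rewrite ?loc4_1 ?loc4_2 ?loc4_3 ?id5E ?mx5_mul in E.


Ltac red5 E := rewrite ?sub5_mul_loc // ?sub5_loc ?sub5_1 in E.


Section Helpers.
Variable K : numFieldType.
Implicit Types x y a b t : K.
Lemma sq0 x : x * x = 0 -> x = 0.
Proof. by move/eqP; rewrite mulf_eq0 orbb => /eqP. Qed.
Lemma mulI0 x y : x != 0 -> x * y = 0 -> y = 0.
Proof. by move=> /negbTE hx /eqP; rewrite mulf_eq0 hx => /eqP. Qed.
Lemma mul0E x y : x * y = 0 -> x = 0 \/ y = 0.
Proof. by move/eqP; rewrite mulf_eq0 => /orP [] /eqP; [left|right]. Qed.
Lemma comb1 a x t : x = 0 -> t = a * x -> t = 0.
Proof. by move=> -> ->; rewrite mulr0. Qed.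
Lemma comb2 a b x y t : x = 0 -> y = 0 -> t = a * x + b * y -> t = 0.
Proof. by move=> -> -> ->; rewrite !mulr0 addr0. Qed.
Lemma sub0 x y : x - y = 0 -> x = y.
Proof. exact: subr0_eq. Qed.
Lemma inv_of x y : x * y - 1 = 0 -> x != 0 /\ y = x^-1.
Proof.
move/sub0 => h; have hx : x != 0 by apply/eqP => hx; move: h; rewrite hx mul0r => /eqP; rewrite eq_sym oner_eq0.
by split => //; apply: (mulfI hx); rewrite h mulfV.
Qed.
Lemma neg_of x y : x + y = 0 -> x = - y.
Proof. by move=> h; rewrite -[x]addr0 -(subrr y) addrA h add0r. Qed.
Lemma inv_of' x y : x * y - 1 = 0 -> y != 0 /\ x = y^-1.
Proof. by move=> h; apply: inv_of; rewrite mulrC. Qed.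
Lemma root01 x : x * x - x = 0 -> x * x - 1 = 0 -> x = 1.
Proof.
move=> h1 h2; have : x * (x - 1) = 0 by rewrite -h1; ring.
case/mul0E => [hx|/sub0 //]; move: h2; rewrite hx mul0r sub0r => /eqP.
by rewrite oppr_eq0 oner_eq0.
Qed.
Lemma mx3_1 : mx3 (1 : K) 0 0 0 1 0 0 0 1 = 1%:M.
Proof.
apply/matrixP => r s; rewrite !mxE.
by case: r => [[|[|[|r]]] Hr] //; case: s => [[|[|[|s]]] Hs].
Qed.
Lemma two_nz : (2%:R : K) != 0.
Proof. by rewrite pnatr_eq0. Qed.
Lemma one_nz : (1 : K) != 0.
Proof. exact: oner_neq0. Qed.

Arguments sq0 {x}. Arguments mulI0 {x y}. Arguments mul0E {x y}. Arguments root01 {x}.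
Arguments inv_of {x y}. Arguments inv_of' {x y}. Arguments neg_of {x y}. Arguments sub0 {x y}.
Tactic Notation "c1" uconstr(A) constr(H) := refine (@comb1 A _ _ H _); ring.
Tactic Notation "c2" uconstr(A) constr(H) uconstr(B) constr(H2) := refine (@comb2 A B _ _ _ H H2 _); ring.
Lemma alg (m11 n11 m12 n12 m13 n13 m21 n21 m22 n22 m23 n23 m31 n31 m32 n32 m33 n33 : K) :
  m13 * m13 - 0 = 0 ->
  0 - m31 * m31 = 0 ->
  n13 * n13 - 0 = 0 ->
  0 - n31 * n31 = 0 ->
  n11 * n11 + n12 * n21 + n13 * n31 - 1 = 0 ->
  n11 * n12 + n12 * n22 + n13 * n32 - 0 = 0 ->
  n11 * n13 + n12 * n23 + n13 * n33 - 0 = 0 ->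
  n21 * n11 + n22 * n21 + n23 * n31 - 0 = 0 ->
  n21 * n12 + n22 * n22 + n23 * n32 - 1 = 0 ->
  n21 * n13 + n22 * n23 + n23 * n33 - 0 = 0 ->
  n31 * n13 + n32 * n23 + n33 * n33 - 1 = 0 ->
  n23 * n11 - n23 = 0 ->
  n33 * n12 - n12 = 0 ->
  n11 * n11 + (n12 * n11 + n13 * n21) * n21 + (n12 * n12 + n13 * n22) * n31 - n11 = 0 ->
  n11 * n12 + (n12 * n11 + n13 * n21) * n22 + (n12 * n12 + n13 * n22) * n32 - (n12 * n11 + n13 * n21) = 0 ->
  n21 * n11 + (n22 * n11 + n23 * n21) * n21 + (n22 * n12 + n23 * n22) * n31 - (n11 * n21 + n12 * n31) = 0 ->
  n21 * n12 + (n22 * n11 + n23 * n21) * n22 + (n22 * n12 + n23 * n22) * n32 - ((n11 * n22 + n12 * n32) * n11 + (n11 * n23 + n12 * n33) * n21 + n13 * n31) = 0 ->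
  n32 * n13 + n33 * n23 - ((n21 * n22 + n22 * n32) * n13 + (n21 * n23 + n22 * n33) * n23 + n23 * n33) = 0 ->
  n31 * n23 + n32 * n33 - ((n31 * n22 + n32 * n32) * n12 + (n31 * n23 + n32 * n33) * n22 + n33 * n32) = 0 ->
  n33 - ((n31 * n22 + n32 * n32) * n13 + (n31 * n23 + n32 * n33) * n23 + n33 * n33) = 0 ->
  m11 * m11 + m12 * m21 + m13 * m31 - 1 = 0 ->
  m11 * m12 + m12 * m22 + m13 * m32 - 0 = 0 ->
  m21 * m11 + m22 * m21 + m23 * m31 - 0 = 0 ->
  m21 * m12 + m22 * m22 + m23 * m32 - 1 = 0 ->
  m21 * m13 + m22 * m23 + m23 * m33 - 0 = 0 ->
  m31 * m12 + m32 * m22 + m33 * m32 - 0 = 0 ->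
  m31 * m13 + m32 * m23 + m33 * m33 - 1 = 0 ->
  m21 * n33 - m21 = 0 ->
  m23 * n11 - m23 = 0 ->
  m32 - n11 * m32 = 0 ->
  n11 * m11 + (n12 * n11 + n13 * n21) * m21 + (n12 * n12 + n13 * n22) * m31 - n11 = 0 ->
  n11 * m12 + (n12 * n11 + n13 * n21) * m22 + (n12 * n12 + n13 * n22) * m32 - (n12 * n11 + n13 * n21) = 0 ->
  n21 * m11 + (n22 * n11 + n23 * n21) * m21 + (n22 * n12 + n23 * n22) * m31 - (m11 * n21 + m12 * n31) = 0 ->
  n21 * m12 + (n22 * n11 + n23 * n21) * m22 + (n22 * n12 + n23 * n22) * m32 - ((m11 * n22 + m12 * n32) * n11 + (m11 * n23 + m12 * n33) * n21 + m13 * n31) = 0 ->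
  n32 * n13 + n33 * n23 - ((m21 * n22 + m22 * n32) * n13 + (m21 * n23 + m22 * n33) * n23 + m23 * n33) = 0 ->
  n31 * m23 + n32 * m33 - ((m31 * n22 + m32 * n32) * n12 + (m31 * n23 + m32 * n33) * n22 + m33 * n32) = 0 ->
  n33 - ((m31 * n22 + m32 * n32) * n13 + (m31 * n23 + m32 * n33) * n23 + m33 * n33) = 0 ->
  n11 * m11 + (n12 * m11 + n13 * m21) * m21 + (n12 * m12 + n13 * m22) * m31 - m11 = 0 ->
  n11 * m12 + (n12 * m11 + n13 * m21) * m22 + (n12 * m12 + n13 * m22) * m32 - (m12 * n11 + m13 * n21) = 0 ->
  n21 * m12 + (n22 * m11 + n23 * m21) * m22 + (n22 * m12 + n23 * m22) * m32 - ((m11 * m22 + m12 * m32) * n11 + (m11 * m23 + m12 * m33) * n21 + m13 * n31) = 0 ->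
  n21 * m13 + (n22 * m11 + n23 * m21) * m23 + (n22 * m12 + n23 * m22) * m33 - ((m11 * m22 + m12 * m32) * n12 + (m11 * m23 + m12 * m33) * n22 + m13 * n32) = 0 ->
  n31 * m13 + (n32 * m11 + n33 * m21) * m23 + (n32 * m12 + n33 * m22) * m33 - ((m21 * m22 + m22 * m32) * n12 + (m21 * m23 + m22 * m33) * n22 + m23 * n32) = 0 ->
  m31 * m23 + m32 * m33 - ((m31 * m22 + m32 * m32) * n12 + (m31 * m23 + m32 * m33) * n22 + m33 * n32) = 0 ->
  m33 - ((m31 * m22 + m32 * m32) * n13 + (m31 * m23 + m32 * m33) * n23 + m33 * n33) = 0 ->
  (exists h p : K,
  [/\ h != 0, p != 0
  & mx3 m11 m12 m13 m21 m22 m23 m31 m32 m33 = M1 h /\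
  mx3 n11 n12 n13 n21 n22 n23 n31 n32 n33 = N1 p]) \/
  (exists d k : K,
  [/\ d != 0, k != 0
  & mx3 m11 m12 m13 m21 m22 m23 m31 m32 m33 = M2 d /\
  mx3 n11 n12 n13 n21 n22 n23 n31 n32 n33 = N2 k]) \/
  (exists p : K,
  p != 0 /\
  mx3 m11 m12 m13 m21 m22 m23 m31 m32 m33 = MN3 p /\
  mx3 n11 n12 n13 n21 n22 n23 n31 n32 n33 = MN3 p) \/
  (exists k : K,
  k != 0 /\
  mx3 m11 m12 m13 m21 m22 m23 m31 m32 m33 = MN4 k /\
  mx3 n11 n12 n13 n21 n22 n23 n31 n32 n33 = MN4 k) \/
  mx3 m11 m12 m13 m21 m22 m23 m31 m32 m33 = 1%:M /\
  mx3 n11 n12 n13 n21 n22 n23 n31 n32 n33 = 1%:M.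
Proof.
move=> s1304 s1340 p1304 p1340 pp00 pp01 pp02 pp10 pp11 pp12 pp22 p1312 p1323 br00 br01 br10 br11 br23 br32 br33 ss00 ss01 ss10 ss11 ss12 ss21 ss22 ps32 sp12 sp21 ra00 ra01 ra10 ra11 ra23 ra32 ra33 rb00 rb01 rb11 rb12 rb22 rb32 rb33.
have /sq0 ? : m13 * m13 = 0 by c1 1 s1304. subst m13.
have /sq0 ? : m31 * m31 = 0 by c1 (-1) s1340. subst m31.
have /sq0 ? : n13 * n13 = 0 by c1 1 p1304. subst n13.
have /sq0 ? : n31 * n31 = 0 by c1 (-1) p1340. subst n31.
clear s1304 s1340 p1304 p1340.
have [?|n12nz] := eqVneq n12 0.
{ subst n12.
  have [?|n23nz] := eqVneq n23 0.
  { subst n23.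
    have e1 : n11 * n11 - n11 = 0 by c1 1 br00.
    have e2 : n11 * n11 - 1 = 0 by c1 1 pp00.
    have ? := root01 e1 e2. subst n11.
    have e3 : n33 * n33 - n33 = 0 by c1 (-1) br33.
    have e4 : n33 * n33 - 1 = 0 by c1 1 pp22.
    have ? := root01 e3 e4. subst n33.
    have e5 : n22 * n22 - 1 = 0 by c1 1 pp11.
    have n22nz : n22 != 0.
      by apply/eqP => h; move: e5; rewrite h mul0r sub0r => /eqP; rewrite oppr_eq0 oner_eq0.
    have /(mulI0 n22nz) ? : n22 * n21 = 0 by c1 1 br10. subst n21.
    have /(mulI0 n22nz) ? : n22 * n32 = 0 by c1 (-1) br32. subst n32.
    have e6 : n22 * n22 - n22 = 0 by c1 1 br11.
    have ? := root01 e6 e5. subst n22.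
    have /sub0 ? : m11 - 1 = 0 by c1 1 ra00. subst m11.
    have ? : m12 = 0 by c1 1 ra01. subst m12.
    have ? : m21 = 0 by c1 1 ra10. subst m21.
    have /sub0 ? : m22 - 1 = 0 by c1 1 ra11. subst m22.
    have ? : m23 = 0 by c1 (-1) ra23. subst m23.
    have ? : m32 = 0 by c1 (-1) ra32. subst m32.
    have /sub0 ? : m33 - 1 = 0 by c1 (-1) ra33. subst m33.
    by right; right; right; right; split; apply: mx3_1. }
  have /(mulI0 n23nz) /sub0 ? : n23 * (n11 - 1) = 0 by c1 1 p1312. subst n11.
  have /(mulI0 n23nz) /neg_of ? : n23 * (n22 + n33) = 0 by c1 1 pp12. subst n22.
  have e7 : n33 * n33 * (n33 - 1) = 0 by c2 n33 pp22 1 br33.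
  have e8 : n23 * (n21 * n23 - n33 * n33) = 0 by c1 (-1) br23.
  have e9 := mulI0 n23nz e8.
  case/mul0E: e7 => [/sq0 ?|/sub0 ?]; subst n33.
  { have /(mulI0 n23nz) ? : n23 * n21 = 0 by c1 1 e9. subst n21.
    have [_ ?] : n23 != 0 /\ n32 = n23^-1 by apply: inv_of; c1 1 pp22. subst n32.
    have /sub0 ? : m11 - 1 = 0 by c1 1 ra00. subst m11.
    have ? : m12 = 0 by c1 1 ra01. subst m12.
    have ? : m21 = 0 by c1 (-1) ps32. subst m21.
    have e10 : m33 * (1 - m32 * n23) = 0 by c1 1 rb33.
    have e11 : n23 * (m22 * m33) = 0 by c1 1 rb12.
    have e12 := mulI0 n23nz e11.
    have e13 : m32 * (m22 + m33) = 0 by c1 1 ss21.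
    have ? : m33 = 0.
    { have [//|m33nz] := eqVneq m33 0.
      have h1 := mulI0 m33nz e10.
      have ? : m22 = 0 by case/mul0E: e12 => // h; move: m33nz; rewrite h eqxx.
      subst m22.
      have m32nz : m32 != 0.
        by apply/eqP => h; move: h1; rewrite h mul0r subr0 => /eqP; rewrite oner_eq0.
      have := mulI0 m32nz e13; rewrite add0r => h; by move: m33nz; rewrite h eqxx. }
    subst m33.
    have e14 : m22 * m22 = 0 by c2 1 ss11 (-1) ss22.
    move/sq0: e14 => ?; subst m22.
    have [m32nz ?] : m32 != 0 /\ m23 = m32^-1 by apply: inv_of; c1 1 ss22. subst m23.
    left; exists m32, n23; split => //; by split; rewrite /M1 /N1 ?oppr0. }
  have ? : n32 = 0 by apply: (mulI0 n23nz); c1 1 pp22. subst n32.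
  have [_ ?] : n23 != 0 /\ n21 = n23^-1 by apply: inv_of; c1 1 e9. subst n21.
  have /sub0 ? : m11 - 1 = 0 by c1 1 ra00. subst m11.
  have ? : m12 = 0 by c1 1 ra01. subst m12.
  have ? : m32 = 0 by c1 1 ra32. subst m32.
  have /sub0 ? : m33 - 1 = 0 by c1 (-1) ra33. subst m33.
  have e15 : 2%:R * (m21 * m23 + m22) = 0 by c1 1 rb22.
  have e16 := mulI0 two_nz e15.
  have ? : m22 = -1.
  { have [h|h] := eqVneq (m22 + 1) 0; first exact: neg_of.
    have ? : m21 = 0 by apply: (mulI0 h); c1 1 ss10. subst m21.
    have ? : m23 = 0 by apply: (mulI0 h); c1 1 ss12. subst m23.
    have ? : m22 = 0 by c1 1 e16. subst m22.
    have : (1:K) = 0 by c1 (-1) ss11.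
    by move/eqP; rewrite oner_eq0. }
  subst m22.
  have e17 : m21 * m23 - 1 = 0 by c1 1 e16.
  have e18 : (n23 * m21 - 1) * (n23 * m21 - 1) = 0 by c2 (-m21) ra23 (-1) e17.
  have [_ ?] : n23 != 0 /\ m21 = n23^-1 by apply: inv_of; apply: sq0.
  subst m21.
  have [_ ?] := inv_of e17. subst m23.
  right; right; left; exists n23; split => //; by split; rewrite /MN3 ?invrK. }
have /(mulI0 n12nz) ? : n12 * n23 = 0 by c1 1 pp02. subst n23.
have /(mulI0 n12nz) /sub0 ? : n12 * (n33 - 1) = 0 by c1 1 p1323. subst n33.
have /(mulI0 n12nz) /neg_of ? : n12 * (n22 + n11) = 0 by c1 1 pp01. subst n22.
have e7 : n11 * n11 * (n11 - 1) = 0 by c2 n11 pp00 (-1) br00.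
have e8 : n12 * (n12 * n32 - n11 * n11) = 0 by c1 1 br01.
have e9 := mulI0 n12nz e8.
case/mul0E: e7 => [/sq0 ?|/sub0 ?]; subst n11.
{ have ? : n32 = 0 by apply: (mulI0 n12nz); c1 1 e9. subst n32.
  have [_ ?] : n12 != 0 /\ n21 = n12^-1 by apply: inv_of; c1 1 pp00. subst n21.
  have ? : m23 = 0 by c1 (-1) sp12. subst m23.
  have ? : m32 = 0 by c1 1 sp21. subst m32.
  have /sub0 ? : m33 - 1 = 0 by c1 (-1) ra33. subst m33.
  have e10 : m11 * (n12 * m21 - 1) = 0 by c1 1 rb00.
  have e11 : n12 * (m11 * m22) = 0 by c1 1 rb01.
  have e12 := mulI0 n12nz e11.
  have e13 : m21 * (m11 + m22) = 0 by c1 1 ss10.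
  have ? : m11 = 0.
  { have [//|m11nz] := eqVneq m11 0.
    have h1 := mulI0 m11nz e10.
    have ? := mulI0 m11nz e12. subst m22.
    have [m21nz _] : m21 != 0 /\ n12 = m21^-1 by apply: inv_of; c1 1 h1.
    have := mulI0 m21nz e13; rewrite addr0 => h; by move: m11nz; rewrite h eqxx. }
  subst m11.
  have e14 : m22 * m22 = 0 by c2 1 ss11 (-1) ss00.
  move/sq0: e14 => ?; subst m22.
  have [m21nz ?] : m21 != 0 /\ m12 = m21^-1 by apply: inv_of; c1 1 ss00. subst m12.
  right; left; exists m21, n12; split => //; by split; rewrite /M2 /N2 ?oppr0. }
have ? : n21 = 0 by apply: (mulI0 n12nz); c1 1 pp00. subst n21.
have [_ ?] : n12 != 0 /\ n32 = n12^-1 by apply: inv_of; c1 1 e9. subst n32.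
have ? : m21 = 0 by c1 (-1) ra10. subst m21.
have /sub0 ? : m11 - 1 = 0 by c1 1 ra00. subst m11.
have ? : m23 = 0 by c1 (-1) ra23. subst m23.
have /sub0 ? : m33 - 1 = 0 by c1 (-1) ra33. subst m33.
have e15 : 2%:R * (m22 + m12 * m32) = 0 by c1 (-1) rb11.
have e16 := mulI0 two_nz e15.
have ? : m22 = -1.
{ have [h|h] := eqVneq (m22 + 1) 0; first exact: neg_of.
  have ? : m12 = 0 by apply: (mulI0 h); c1 1 ss01. subst m12.
  have ? : m32 = 0 by apply: (mulI0 h); c1 1 ss21. subst m32.
  have ? : m22 = 0 by c1 1 e16. subst m22.
  have : (1:K) = 0 by c1 (-1) ss11.
  by move/eqP; rewrite oner_eq0. }
subst m22.
have e17 : m12 * m32 - 1 = 0 by c1 1 e16.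
have e18 : (n12 * m32 - 1) * (n12 * m32 - 1) = 0 by c2 m32 ra01 (-1) e17.
have [_ ?] : n12 != 0 /\ m32 = n12^-1 by apply: inv_of; apply: sq0.
subst m32.
have [_ ?] := inv_of' e17. subst m12.
right; right; right; left; exists n12; split => //; by split; rewrite /MN4 ?invrK.
Qed.
End Helpers.

Lemma main_gen (K : numFieldType) (n : nat) (M N : 'M[K]_3) :
  (4 <= n)%N ->
  homog_3local_rep n M N ->
     (exists h p : K, [/\ h != 0, p != 0 & M = M1 h /\ N = N1 p]) \/
      (exists d k : K, [/\ d != 0, k != 0 & M = M2 d /\ N = N2 k]) \/
      (exists p : K, p != 0 /\ M = MN3 p /\ N = MN3 p) \/
      (exists k : K, k != 0 /\ M = MN4 k /\ N = MN4 k) \/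
      (M = 1%:M /\ N = 1%:M).
Proof.
move=> n4 [_ [_ [SS [S13 [Br [P13 [PP [SP [R1 R2]]]]]]]]].
have H5 : (5 <= n.+1)%N by rewrite ltnS.
have g1 : gen_idx n 1 by rewrite /gen_idx; case: n n4 {SS S13 Br P13 PP SP R1 R2 H5} => [|[|[|[|n]]]].
have g3 : gen_idx n 3 by rewrite /gen_idx; case: n n4 {SS S13 Br P13 PP SP R1 R2 H5 g1} => [|[|[|[|n]]]].
have b1 : (1 <= 1 <= n - 2)%N by case: n n4 {SS S13 Br P13 PP SP R1 R2 H5 g1 g3} => [|[|[|[|n]]]].
have eSS := congr1 (sub5 H5) (SS 1%N g1). red5 eSS. prep eSS.
have eS13 := congr1 (sub5 H5) (S13 1%N 3%N g1 g3 isT). red5 eS13. prep eS13.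
have eBr := congr1 (sub5 H5) (Br 1%N b1). red5 eBr. prep eBr.
have eP13 := congr1 (sub5 H5) (P13 1%N 3%N g1 g3 isT). red5 eP13. prep eP13.
have ePP := congr1 (sub5 H5) (PP 1%N g1). red5 ePP. prep ePP.
have eSP := congr1 (sub5 H5) (SP 1%N 3%N g1 g3 isT). red5 eSP. prep eSP.
have ePS := congr1 (sub5 H5) (SP 3%N 1%N g3 g1 isT). red5 ePS. prep ePS.
have eR1 := congr1 (sub5 H5) (R1 1%N b1). red5 eR1. prep eR1.
have eR2 := congr1 (sub5 H5) (R2 1%N b1). red5 eR2. prep eR2.
clear SS S13 Br P13 PP SP R1 R2.
ent eS13 0%N 4%N s1304.
ent eS13 4%N 0%N s1340.
ent eP13 0%N 4%N p1304.
ent eP13 4%N 0%N p1340.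
ent ePP 0%N 0%N pp00.
ent ePP 0%N 1%N pp01.
ent ePP 0%N 2%N pp02.
ent ePP 1%N 0%N pp10.
ent ePP 1%N 1%N pp11.
ent ePP 1%N 2%N pp12.
ent ePP 2%N 2%N pp22.
ent eP13 1%N 2%N p1312.
ent eP13 2%N 3%N p1323.
ent eBr 0%N 0%N br00.
ent eBr 0%N 1%N br01.
ent eBr 1%N 0%N br10.
ent eBr 1%N 1%N br11.
ent eBr 2%N 3%N br23.
ent eBr 3%N 2%N br32.
ent eBr 3%N 3%N br33.
ent eSS 0%N 0%N ss00.
ent eSS 0%N 1%N ss01.
ent eSS 1%N 0%N ss10.
ent eSS 1%N 1%N ss11.
ent eSS 1%N 2%N ss12.
ent eSS 2%N 1%N ss21.
ent eSS 2%N 2%N ss22.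
ent ePS 3%N 2%N ps32.
ent eSP 1%N 2%N sp12.
ent eSP 2%N 1%N sp21.
ent eR1 0%N 0%N ra00.
ent eR1 0%N 1%N ra01.
ent eR1 1%N 0%N ra10.
ent eR1 1%N 1%N ra11.
ent eR1 2%N 3%N ra23.
ent eR1 3%N 2%N ra32.
ent eR1 3%N 3%N ra33.
ent eR2 0%N 0%N rb00.
ent eR2 0%N 1%N rb01.
ent eR2 1%N 1%N rb11.
ent eR2 1%N 2%N rb12.
ent eR2 2%N 2%N rb22.
ent eR2 3%N 2%N rb32.
ent eR2 3%N 3%N rb33.
clear eSS eS13 eBr eP13 ePP eSP ePS eR1 eR2 H5 g1 g3 b1 n4.
rewrite [M]mx3E [N]mx3E.
move: s1304 s1340 p1304 p1340 pp00 pp01 pp02 pp10 pp11 pp12 pp22 p1312 p1323 br00 br01 br10 br11 br23 br32 br33 ss00 ss01 ss10 ss11 ss12 ss21 ss22 ps32 sp12 sp21 ra00 ra01 ra10 ra11 ra23 ra32 ra33 rb00 rb01 rb11 rb12 rb22 rb32 rb33.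
move: (M (inord 0) (inord 0)) => m11.
move: (N (inord 0) (inord 0)) => n11.
move: (M (inord 0) (inord 1)) => m12.
move: (N (inord 0) (inord 1)) => n12.
move: (M (inord 0) (inord 2)) => m13.
move: (N (inord 0) (inord 2)) => n13.
move: (M (inord 1) (inord 0)) => m21.
move: (N (inord 1) (inord 0)) => n21.
move: (M (inord 1) (inord 1)) => m22.
move: (N (inord 1) (inord 1)) => n22.
move: (M (inord 1) (inord 2)) => m23.
move: (N (inord 1) (inord 2)) => n23.
move: (M (inord 2) (inord 0)) => m31.
move: (N (inord 2) (inord 0)) => n31.
move: (M (inord 2) (inord 1)) => m32.
move: (N (inord 2) (inord 1)) => n32.
move: (M (inord 2) (inord 2)) => m33.
move: (N (inord 2) (inord 2)) => n33.
move=> s1304 s1340 p1304 p1340 pp00 pp01 pp02 pp10 pp11 pp12 pp22 p1312 p1323 br00 br01 br10 br11 br23 br32 br33 ss00 ss01 ss10 ss11 ss12 ss21 ss22 ps32 sp12 sp21 ra00 ra01 ra10 ra11 ra23 ra32 ra33 rb00 rb01 rb11 rb12 rb22 rb32 rb33.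
exact: alg.
Qed.

Theorem theorem4p2 (R : realType) (n : nat) (M N : 'M[R[i]]_3) :
  (4 <= n)%N ->
  homog_3local_rep n M N ->
     (exists h p : R[i], [/\ h != 0, p != 0 & equiv_local n M N (M1 h) (N1 p)]) \/
      (exists d k : R[i], [/\ d != 0, k != 0 & equiv_local n M N (M2 d) (N2 k)]) \/
      (exists p : R[i], p != 0 /\ equiv_local n M N (MN3 p) (MN3 p)) \/
      (exists k : R[i], k != 0 /\ equiv_local n M N (MN4 k) (MN4 k)) \/
      equiv_local n M N 1%:M 1%:M.
Proof.
move=> n4 hrep.
case: (@main_gen _ n M N n4 hrep) => [[h [p [hn pn [eM eN]]]]|[[d [k [dn kn [eM eN]]]]|[[p [pn [eM eN]]]|[[k [kn [eM eN]]]|[eM eN]]]]].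
- by left; exists h, p; split => //; exact: equiv_of_eq.
- by right; left; exists d, k; split => //; exact: equiv_of_eq.
- by right; right; left; exists p; split => //; exact: equiv_of_eq.
- by right; right; right; left; exists k; split => //; exact: equiv_of_eq.
- by right; right; right; right; exact: equiv_of_eq.
Qed.
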